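(* $Lex_{AB}$ is not universal: there is an epistemic space $\mathbb{S}$ that is identifiable in the limit but is not identifiable in the limit by $Lex_{AB}$.
   Context: An epistemic space is a pair $\mathbb{S}=(S,\mathcal{O})$ where $S$ is a non-empty, at most countable set of worlds and $\mathcal{O}\subseteq\mathcal{P}(S)$ is a set of observables. A data stream is an infinite sequence $\vec O=(O_0,O_1,\ldots)$ of elements of $\mathcal{O}$; $\vec O[n]=(O_0,\ldots,O_{n-1})$; it is sound for $s$ if $s\in O_n$ for all $n$ and complete for $s$ if every $O\in\mathcal{O}$ with $s\in O$ occurs in it. $\mathbb{S}$ is identifiable in the limit if some learner (map from finite sequences to subsets of $S$) outputs $\{s\}$ on all sufficiently long initial segments of every stream sound and complete for $s$, for every $s\in S$. A plausibility space is $\mathbb{B}=(S,\mathcal{O},\preceq)$, $\preceq$ a total preorder on $S$; $\min_\preceq X$ is the set of $\preceq$-minimal elements of $X$. Lexicographic revision: for $p\subseteq S$, $\bar p=S\setminus p$, $Lex_1(\mathbb{B},p)=(S,\mathcal{O},\preceq')$ with $t\preceq' w$ iff ($t,w\in p$ and $t\preceq w$) or ($t,w\in\bar p$ and $t\preceq w$) or ($t\in p$, $w\notin p$). Upgrade: for a preorder $\preceq$ on $S$ and $x\in S$, ${\preceq}\uparrow x=({\preceq}\cap((S\setminus\{x\})\times(S\setminus\{x\})))\cup\{(x,s)\mid s\in S\setminus\{x\}\}$. Anchored lexicographic revision: if $Lex_1(\mathbb{B},p)=(S,\mathcal{O},\preceq')$, then $Lex^+_1(\mathbb{B},p)=(S,\mathcal{O},\preceq')$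 if $|\min_{\preceq'}S|=1$, and otherwise $Lex^+_1(\mathbb{B},p)=(S,\mathcal{O},{\preceq'}\uparrow x)$ for some (randomly chosen) $x\in\min_{\preceq'}S$. The anchoring-biased method: $Lex_{AB}(\mathbb{B},\lambda)=\mathbb{B}$ and $Lex_{AB}(\mathbb{B},\sigma\cdot p)=Lex^+_1(Lex_{AB}(\mathbb{B},\sigma),\min_{\preceq_{AB}}(S\cap p))$, where $Lex_{AB}(\mathbb{B},\sigma)=(S,\mathcal{O},\preceq_{AB})$. Its conjecture on $\sigma$ is the set of minimal worlds of $Lex_{AB}((S,\mathcal{O},\preceq),\sigma)$. $\mathbb{S}$ is identifiable in the limit by $Lex_{AB}$ if there is a total preorder $\preceq$ on $S$ such that for every $s\in S$, every stream sound and complete for $s$, and every resolution of the random choices, the conjecture on $\vec O[n]$ is $\{s\}$ for all sufficiently large $n$. *)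

(* Defs.v *)
From Stdlib Require Import List.

Section Defs.
Variable W : Type.  (* the set S of worlds is the whole carrier type W *)

Definition pset := W -> Prop.
Definition prel := W -> W -> Prop.

Definition at_most_countable : Prop :=
  exists f : W -> nat, forall x y, f x = f y -> x = y.

Definition data_stream (Obs : pset -> Prop) (D : nat -> pset) : Prop :=
  forall n, Obs (D n).
Definition sound_for (D : nat -> pset) (s : W) : Prop := forall n, D n s.
Definition complete_for (Obs : pset -> Prop) (D : nat -> pset) (s : W) : Prop :=
  forall O, Obs O -> O s -> exists n, D n = O.

(* initial segment  D[n] = (D 0, ..., D (n-1)) *)
Definition prefix (D : nat -> pset) (n : nat) : list pset := map D (seq 0 n).

Definition is_singleton_of (X : pset) (s : W) : Prop := forall w, X w <-> w = s.
Definition is_singleton (X : pset) : Prop := exists s, is_singleton_of X s.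

Definition identifiable (Obs : pset -> Prop) : Prop :=
  exists L : list pset -> pset,
    forall s D, data_stream Obs D -> sound_for D s -> complete_for Obs D s ->
      exists N, forall n, N <= n -> is_singleton_of (L (prefix D n)) s.

Definition total_preorder (le : prel) : Prop :=
  (forall x y, le x y \/ le y x) /\ (forall x y z, le x y -> le y z -> le x z).

Definition minset (le : prel) (X : pset) : pset :=
  fun x => X x /\ forall y, X y -> le y x -> le x y.

Definition setT : pset := fun _ => True.

Definition lex1 (le : prel) (p : pset) : prel :=
  fun t w => (p t /\ p w /\ le t w) \/ (~ p t /\ ~ p w /\ le t w) \/ (p t /\ ~ p w).

(* upgrade  le ↑ x  (taken literally from the paper) *)
Definition upgrade (le : prel) (x : W) : prel :=
  fun t w => (t <> x /\ w <> x /\ le t w) \/ (t = x /\ w <> x).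

Definition rel_eq (r1 r2 : prel) : Prop := forall t w, r1 t w <-> r2 t w.

(* anchored lexicographic revision Lex^+_1, as a (nondeterministic) relation:
   lexplus le p le2  iff  le2 is a possible result of Lex^+_1(le, p) *)
Definition lexplus (le : prel) (p : pset) (le2 : prel) : Prop :=
  (is_singleton (minset (lex1 le p) setT) /\ rel_eq le2 (lex1 le p)) \/
  (~ is_singleton (minset (lex1 le p) setT) /\
   exists x, minset (lex1 le p) setT x /\ rel_eq le2 (upgrade (lex1 le p) x)).

Definition ab_step (le : prel) (p : pset) (le2 : prel) : Prop :=
  lexplus le (minset le p) le2.

(* P 0, ..., P n is a run of Lex_AB (one resolution of the random choices)
   from the prior le0 on the stream D *)
Definition ab_partial_run (le0 : prel) (D : nat -> pset) (P : nat -> prel) (n : nat)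
  : Prop :=
  rel_eq (P 0) le0 /\ forall k, k < n -> ab_step (P k) (D k) (P (S k)).

Definition ab_run (le0 : prel) (D : nat -> pset) (P : nat -> prel) : Prop :=
  rel_eq (P 0) le0 /\ forall k, ab_step (P k) (D k) (P (S k)).

(* identifiability in the limit by Lex_AB: the method is defined along every
   resolution of the random choices, and on every resolution the conjecture
   (minimal worlds of the current order) is eventually {s} *)
Definition identifiable_LexAB (Obs : pset -> Prop) : Prop :=
  exists le0 : prel, total_preorder le0 /\
    forall s D, data_stream Obs D -> sound_for D s -> complete_for Obs D s ->
      (forall n P, ab_partial_run le0 D P n -> exists le2, ab_step (P n) (D n) le2) /\
      (forall P, ab_run le0 D P ->
         exists N, forall n, N <= n -> is_singleton_of (minset (P n) setT) s).

End Defs.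

(* Main.v *)
Require Import Defs.
From Stdlib Require Import Setoid List Arith Lia Classical.

Inductive W3 : Type := wa | wb | wc.

Lemma W3_dec : forall x y : W3, {x = y} + {x <> y}.
Proof. decide equality. Qed.

Definition O1 : pset W3 := fun w => w = wa \/ w = wb.
Definition O2 : pset W3 := fun w => w = wa \/ w = wc.
Definition Obs3 : pset W3 -> Prop := fun O => O = O1 \/ O = O2.

Lemma lex1_single (R : prel W3) (q : pset W3) y :
  (forall w, q w <-> w = y) -> forall t w,
  lex1 W3 R q t w <-> (t = y /\ w = y /\ R t w) \/ (t <> y /\ w <> y /\ R t w)
                      \/ (t = y /\ w <> y).
Proof. intros Hq t w. unfold lex1. rewrite !Hq. tauto. Qed.

Lemma min_lex1_single (R : prel W3) (q : pset W3) y :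
  (forall w, q w <-> w = y) -> is_singleton_of W3 (minset W3 (lex1 W3 R q) (setT W3)) y.
Proof.
  intros Hq w. unfold minset, setT. split.
  - intros [_ Hm]. destruct (W3_dec w y) as [e|n]; auto.
    specialize (Hm y I). rewrite !(lex1_single R q y Hq) in Hm. exfalso.
    destruct Hm as [[? [? ?]]|[[? [? ?]]|[? ?]]]; try tauto; try congruence.
  - intros ->. split; auto. intros z _ Hz. rewrite (lex1_single R q y Hq) in Hz |- *.
    destruct Hz as [[? [? ?]]|[[? [? ?]]|[? ?]]]; try congruence.
    subst. left. auto.
Qed.

Lemma step_det (R : prel W3) (p : pset W3) y :
  (forall w, minset W3 R p w <-> w = y) -> ab_step W3 R p (lex1 W3 R (minset W3 R p)).
Proof.
  intros H. unfold ab_step, lexplus. left. split.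
  - exists y. apply min_lex1_single; auto.
  - intros t w; tauto.
Qed.

Fixpoint drun (R : prel W3) (D : nat -> pset W3) (k : nat) : prel W3 :=
  match k with
  | 0 => R
  | S k => let R' := drun R D k in lex1 W3 R' (minset W3 R' (D k))
  end.

Definition Jinv (y : W3) (R : prel W3) : Prop := R wa y /\ ~ R y wa.

Lemma J_min (y : W3) (p : pset W3) (R : prel W3) :
  y <> wa -> (forall w, p w <-> w = wa \/ w = y) -> Jinv y R ->
  forall w, minset W3 R p w <-> w = wa.
Proof.
  intros ny Hp [J1 J2] w. unfold minset. split.
  - intros [pw Hm]. apply Hp in pw. destruct pw as [-> | ->]; auto.
    exfalso. apply J2. apply Hm; auto. apply Hp; auto.
  - intros ->. split. apply Hp; auto. intros z pz Hz. apply Hp in pz.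
    destruct pz as [-> | ->]; auto; contradiction.
Qed.

Lemma J_pres (y : W3) (p : pset W3) (R : prel W3) :
  y <> wa -> (forall w, p w <-> w = wa \/ w = y) -> Jinv y R ->
  Jinv y (lex1 W3 R (minset W3 R p)) /\ ab_step W3 R p (lex1 W3 R (minset W3 R p)).
Proof.
  intros ny Hp HJ. pose proof (J_min y p R ny Hp HJ) as Hq. split.
  - unfold Jinv. rewrite !(lex1_single R _ wa Hq). split.
    + right; right. auto.
    + intros [[? [? ?]]|[[? [? ?]]|[? ?]]]; congruence.
  - apply (step_det R p wa); auto.
Qed.

Lemma J_drun (y : W3) (p : pset W3) (R : prel W3) :
  y <> wa -> (forall w, p w <-> w = wa \/ w = y) -> Jinv y R ->
  forall k, Jinv y (drun R (fun _ => p) k) /\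
            ab_step W3 (drun R (fun _ => p) k) p (drun R (fun _ => p) (S k)).
Proof.
  intros ny Hp HJ k. induction k as [|k [IH1 IH2]].
  - simpl. split; [exact HJ | exact (proj2 (J_pres y p R ny Hp HJ))].
  - assert (H1 : Jinv y (drun R (fun _ => p) (S k))) by (simpl; exact (proj1 (J_pres y p _ ny Hp IH1))).
    split; [exact H1|]. exact (proj2 (J_pres y p _ ny Hp H1)).
Qed.

Lemma stream_y (le0 : prel W3) (y : W3) (p : pset W3) :
  total_preorder W3 le0 ->
  y <> wa -> (forall w, p w <-> w = wa \/ w = y) -> Obs3 p ->
  (forall s D, data_stream W3 Obs3 D -> sound_for W3 D s -> complete_for W3 Obs3 D s ->
      (forall P, ab_run W3 le0 D P ->
         exists N, forall n, N <= n -> is_singleton_of W3 (minset W3 (P n) (setT W3)) s)) ->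
  ~ le0 wa y.
Proof.
  intros Tot ny Hp Op H Hay.
  assert (Hds : data_stream W3 Obs3 (fun _ => p)) by (intro; auto).
  assert (Hso : sound_for W3 (fun _ => p) y) by (intro; apply Hp; auto).
  assert (Hco : complete_for W3 Obs3 (fun _ => p) y).
  { intros O HO Oy. exists 0. assert (Hy : p y) by (apply Hp; auto).
    destruct Op as [-> | ->]; destruct HO as [-> | ->]; auto; exfalso;
    unfold O1, O2 in *; destruct Hy as [e|e]; destruct Oy as [e'|e'];
    subst; try congruence; discriminate. }
  specialize (H y _ Hds Hso Hco).
  assert (exists P : nat -> prel W3, ab_run W3 le0 (fun _ => p) P /\
            forall k, Jinv y (P (S k))) as [P [HP HJ]].
  { destruct (classic (le0 y wa)) as [Hya|Hya].
    - set (q := minset W3 le0 p).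
      assert (Hq : forall w, q w <-> w = wa \/ w = y).
      { intro w. unfold q, minset. split.
        - intros [pw _]. apply Hp; auto.
        - intros Hw. split. apply Hp; auto. intros z pz Hz. apply Hp in pz.
          destruct Hw as [-> | ->]; destruct pz as [-> | ->]; auto. }
      set (R1 := upgrade W3 (lex1 W3 le0 q) wa).
      assert (HJ1 : Jinv y R1).
      { unfold Jinv, R1, upgrade. split. right; split; auto.
        intros [[? [? ?]]|[? ?]]; congruence. }
      exists (fun k => match k with 0 => le0 | S k => drun R1 (fun _ => p) k end).
      split; [split|].
      + intros t w; tauto.
      + intros [|k].
        * unfold ab_step, lexplus. right.
          assert (Hmin : forall z, q z -> minset W3 (lex1 W3 le0 q) (setT W3) z).
          { intros z qz. split. exact I. intros u _ Hu. unfold lex1 in Hu |- *.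
            destruct Hu as [[qu [_ Hu]]|[[nu [nz _]]|[_ nz]]]; try contradiction.
            left. split; auto. split; auto.
            apply Hq in qz; apply Hq in qu.
            destruct qz as [-> | ->]; destruct qu as [-> | ->]; auto. }
          split.
          -- intros [s Hs]. assert (e1 : wa = s) by (apply Hs, Hmin, Hq; auto).
             assert (e2 : y = s) by (apply Hs, Hmin, Hq; auto). congruence.
          -- exists wa. split. apply Hmin, Hq; auto. intros t w; unfold R1; tauto.
        * apply (J_drun y p R1 ny Hp HJ1 k).
      + intro k. apply (J_drun y p R1 ny Hp HJ1 k).
    - assert (HJ0 : Jinv y le0) by (split; auto).
      exists (drun le0 (fun _ => p)). split; [split|].
      + intros t w; tauto.
      + intro k. apply (J_drun y p le0 ny Hp HJ0 k).
      + intro k. apply (J_drun y p le0 ny Hp HJ0 (S k)). }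
  destruct (H P HP) as [N HN].
  specialize (HN (S N) (le_S _ _ (le_n N))).
  destruct (HJ N) as [J1 J2].
  assert (my : minset W3 (P (S N)) (setT W3) y) by (apply HN; auto).
  destruct my as [_ my]. apply J2. apply my; auto. exact I.
Qed.

Definition Iinv (R : prel W3) : Prop := R wb wa /\ ~ R wa wb /\ R wc wa /\ ~ R wa wc.

Lemma I_pres (R : prel W3) (p : pset W3) : Iinv R -> Obs3 p ->
  Iinv (lex1 W3 R (minset W3 R p)) /\ ab_step W3 R p (lex1 W3 R (minset W3 R p)).
Proof.
  intros [I1 [I2 [I3 I4]]] Op.
  assert (exists y, forall w, minset W3 R p w <-> w = y) as [y Hq].
  { destruct Op as [-> | ->]; [exists wb | exists wc]; intro w; unfold minset, O1, O2;
    split.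
    - intros [[-> | ->] Hm]; auto. exfalso. apply I2, Hm; auto.
    - intros ->. split; auto. intros z [-> | ->] Hz; auto; contradiction.
    - intros [[-> | ->] Hm]; auto. exfalso. apply I4, Hm; auto.
    - intros ->. split; auto. intros z [-> | ->] Hz; auto; contradiction. }
  split; [| apply (step_det R p y Hq)].
  assert (Hy : y = wb \/ y = wc).
  { destruct Op as [-> | ->]; [left|right]; symmetry; apply Hq; unfold minset, O1, O2; split; auto;
    intros z [-> | ->] Hz; auto; contradiction. }
  unfold Iinv. rewrite !(lex1_single R _ y Hq).
  destruct Hy as [-> | ->]; repeat split;
    try (intros [[? [? ?]]|[[? [? ?]]|[? ?]]]; congruence);
    try (right; right; split; congruence);
    try (right; left; repeat split; first [congruence | assumption]).
Qed.

Lemma in_prefix (D : nat -> pset W3) n X :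
  In X (prefix W3 D n) <-> exists k, k < n /\ D k = X.
Proof.
  unfold prefix. rewrite in_map_iff. split.
  - intros [k [e Hk]]. apply in_seq in Hk. exists k. split; [lia|auto].
  - intros [k [Hk e]]. exists k. split; auto. apply in_seq. lia.
Qed.

Theorem mainTheorem7 :
  exists (W : Type) (Obs : (W -> Prop) -> Prop),
    inhabited W /\ at_most_countable W /\
    identifiable W Obs /\ ~ identifiable_LexAB W Obs.
Proof.
  exists W3, Obs3. split; [constructor; exact wa|]. split.
  { exists (fun w => match w with wa => 0 | wb => 1 | wc => 2 end).
    intros [| |] [| |]; simpl; intro; congruence. }
  split.
  - exists (fun l w => (In O1 l /\ In O2 l /\ w = wa) \/ (In O1 l /\ ~ In O2 l /\ w = wb)
                    \/ (~ In O1 l /\ w = wc)).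
    intros s D Hds Hso Hco.
    assert (no : forall X, ~ X s -> forall n, ~ In X (prefix W3 D n)).
    { intros X nX n Hin. apply in_prefix in Hin. destruct Hin as [k [_ e]].
      apply nX. rewrite <- e. apply Hso. }
    destruct s.
    + destruct (Hco O1 (or_introl eq_refl) (or_introl eq_refl)) as [n1 e1].
      destruct (Hco O2 (or_intror eq_refl) (or_introl eq_refl)) as [n2 e2].
      exists (S (n1 + n2)). intros n Hn w.
      assert (In O1 (prefix W3 D n)) by (apply in_prefix; exists n1; split; [lia|auto]).
      assert (In O2 (prefix W3 D n)) by (apply in_prefix; exists n2; split; [lia|auto]).
      tauto.
    + destruct (Hco O1 (or_introl eq_refl) (or_intror eq_refl)) as [n1 e1].
      exists (S n1). intros n Hn w.
      assert (In O1 (prefix W3 D n)) by (apply in_prefix; exists n1; split; [lia|auto]).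
      assert (~ In O2 (prefix W3 D n)).
      { apply no. unfold O2. intros [e|e]; discriminate. }
      tauto.
    + exists 0. intros n _ w.
      assert (~ In O1 (prefix W3 D n)).
      { apply no. unfold O1. intros [e|e]; discriminate. }
      tauto.
  - intros [le0 [Tot H]].
    assert (H' : forall s D, data_stream W3 Obs3 D -> sound_for W3 D s ->
              complete_for W3 Obs3 D s ->
      (forall P, ab_run W3 le0 D P ->
         exists N, forall n, N <= n -> is_singleton_of W3 (minset W3 (P n) (setT W3)) s)).
    { intros s D a b c. apply (H s D a b c). }
    assert (nb : ~ le0 wa wb).
    { apply (stream_y le0 wb O1 Tot); auto. discriminate.
      intro w; unfold O1; tauto. left; auto. }
    assert (nc : ~ le0 wa wc).
    { apply (stream_y le0 wc O2 Tot); auto. discriminate.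
      intro w; unfold O2; tauto. right; auto. }
    assert (HI : Iinv le0).
    { destruct Tot as [T _]. unfold Iinv.
      destruct (T wa wb); destruct (T wa wc); tauto. }
    set (D := fun n => if Nat.even n then O1 else O2).
    assert (HD : forall n, Obs3 (D n)).
    { intro n. unfold D. destruct (Nat.even n); [left|right]; auto. }
    assert (Hrun : forall k, Iinv (drun le0 D k) /\
                   ab_step W3 (drun le0 D k) (D k) (drun le0 D (S k))).
    { induction k as [|k [IH1 IH2]].
      - split; auto. exact (proj2 (I_pres le0 (D 0) HI (HD 0))).
      - assert (H1 : Iinv (drun le0 D (S k)))
          by (simpl; exact (proj1 (I_pres _ (D k) IH1 (HD k)))).
        split; auto. exact (proj2 (I_pres _ (D (S k)) H1 (HD (S k)))). }
    assert (Hds : data_stream W3 Obs3 D) by exact HD.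
    assert (Hso : sound_for W3 D wa).
    { intro n. unfold D. destruct (Nat.even n); left; auto. }
    assert (Hco : complete_for W3 Obs3 D wa).
    { intros O [-> | ->] _; [exists 0 | exists 1]; reflexivity. }
    destruct (H' wa D Hds Hso Hco (drun le0 D)) as [N HN].
    + split. intros t w; tauto. intro k. apply Hrun.
    + specialize (HN N (le_n N)). destruct (proj1 (Hrun N)) as [I1 [I2 _]].
      assert (m : minset W3 (drun le0 D N) (setT W3) wa) by (apply HN; auto).
      destruct m as [_ m]. apply I2, m; auto. exact I.
Qed.
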